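(* Let $n\ge 2$, $\rho>0$, and let $F$ be a continuous distribution supported on the non-negative real numbers with a monotone decreasing density $f$. Then the worst-case zero-outage capacity $\underline{R^{0}}(\rho)=\log_2(1-\rho\,\phi_{-}(1))$ equals $0$.
   Context: Let $X\sim F$, $G=F^{-1}$. The function $\phi_{-}$ is defined for the distribution of $-X$, which has the increasing density $x\mapsto f(-x)$ and quantile function $G_{-}(x)=-G(1-x)$: for $a\in[0,1]$ let $H^{-}_a(x)=G_{-}(a+x)+(n-1)G_{-}(1-(n-1)x)$, $c^{-}_n(a)=\min\{c\in[0,\tfrac{1-a}{n}]: \int_c^{(1-a)/n}H^{-}_a(t)\,dt\le(\tfrac{1-a}{n}-c)H^{-}_a(c)\}$, and $\phi_{-}(a)=H^{-}_a(0)=-(G(1-a)+(n-1)G(0))$ if $c^{-}_n(a)>0$, $\phi_{-}(a)=n\,\mathbb{E}[-X\mid -X>G_{-}(a)]=-n\,\mathbb{E}[X\mid X<G(1-a)]$ if $c^{-}_n(a)=0$. The quantity $\log_2(1-\rho\phi_{-}(1-\varepsilon))$ is the smallest $\varepsilon$-outage capacity $\sup\{R\ge0:\Pr(\sum_{i=1}^n|h_i|^2<(2^R-1)/\rho)<\varepsilon\}$ over joint distributions of $(|h_1|^2,\dots,|h_n|^2)$ with each $|h_i|^2\sim F$; zero outage is $\varepsilon=0$. *)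

(* Defs.v *)
From HB Require Import structures.
From mathcomp Require Import all_boot all_order all_algebra.
From mathcomp Require Import all_classical all_reals all_analysis.
Set Implicit Arguments. Unset Strict Implicit. Unset Printing Implicit Defensive.
Import Order.TTheory GRing.Theory Num.Theory.
Local Open Scope classical_set_scope.
Local Open Scope ring_scope.

Definition decreasing_density (R : realType) (f : R -> R) : Prop :=
  [/\ (forall x, 0 <= f x),
      measurable_fun setT f,
      (\int[lebesgue_measure]_(y in setT) (f y)%:E = 1)%E,
      (forall x, x < 0 -> f x = 0)
    & {in `[0, +oo[ &, {homo f : x y /~ x <= y}}].

Definition cdf_of (R : realType) (f : R -> R) (x : R) : \bar R :=
  (\int[lebesgue_measure]_(y in `]-oo, x]) (f y)%:E)%E.

(* Zero-outage capacity of a given joint law of (|h_1|^2, ..., |h_n|^2),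
   realised as random variables X i on a probability space (T, P):
   sup { R >= 0 : Pr( sum_i X_i < (2^R - 1)/rho ) = 0 }. *)
Definition zero_outage_capacity (R : realType) (d : measure_display)
    (T : measurableType d) (P : probability T R) (n : nat)
    (X : 'I_n -> T -> R) (rho : R) : \bar R :=
  ereal_sup [set r%:E | r in
    [set r : R | 0 <= r /\
       P [set w | \sum_(i < n) X i w < (2 `^ r - 1) / rho] = 0%E]].

Definition worst_case_zero_outage (R : realType) (n : nat) (f : R -> R)
    (rho : R) : \bar R :=
  ereal_inf [set c | exists (d : measure_display) (T : measurableType d)
      (P : probability T R) (X : 'I_n -> T -> R),
      [/\ (forall i, measurable_fun setT (X i)),
          (forall i x, P (X i @^-1` `]-oo, x]) = cdf_of f x)
        & c = zero_outage_capacity P X rho]].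

(* Main.v *)
Require Import Defs.
From HB Require Import structures.
From mathcomp Require Import all_boot all_order all_algebra.
From mathcomp Require Import all_classical all_reals all_analysis.
From mathcomp Require Import measurable_realfun.
From mathcomp Require Import ring lra.
Import Order.TTheory GRing.Theory Num.Theory.
Local Open Scope ring_scope.
Local Open Scope classical_set_scope.

Section dens.
Context (R : realType) (f : R -> R) (hf : decreasing_density f).

Definition dprob (A : set R) : \bar R :=
  let _ := hf in (\int[lebesgue_measure]_(x in A) (f x)%:E)%E.

Let f0 x : 0 <= f x. Proof. by case: hf. Qed.
Let mf : measurable_fun setT f. Proof. by case: hf. Qed.

Let d0 : dprob set0 = 0%E.
Proof. by rewrite /dprob integral_set0. Qed.

Let dge0 A : (0 <= dprob A)%E.
Proof. by rewrite /dprob integral_ge0// => x _; rewrite lee_fin. Qed.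

Let dsa : semi_sigma_additive dprob.
Proof.
move=> /= A mA tA mUA.
rewrite /dprob/= ge0_integral_bigcup//=.
- apply: is_cvg_ereal_nneg_natsum_cond => n _ _.
  by apply: integral_ge0 => /= x ?; rewrite lee_fin.
- by apply/measurable_EFinP; exact: measurable_funTS.
- by move=> x _; rewrite lee_fin.
Qed.

HB.instance Definition _ := isMeasure.Build _ _ _ dprob d0 dge0 dsa.

Let dT : dprob [set: _] = 1%E.
Proof. by rewrite /dprob; case: hf. Qed.

HB.instance Definition _ := @Measure_isProbability.Build _ _ R dprob dT.

Lemma cap_le0 (n : nat) (rho : R) : (0 < n)%N -> 0 < rho ->
  (zero_outage_capacity dprob (fun _ : 'I_n => id) rho <= 0)%E.
Proof.
move=> n0 rho0.
have [_ _ f1 fneg fdec] := hf.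
apply: ge_ereal_sup => _ [r [r0 Pr] <-]; rewrite lee_fin leNgt; apply/negP => rpos.
set c := (2 `^ r - 1) / rho.
have c0 : 0 < c.
  apply: divr_gt0 => //; rewrite subr_gt0 lt_neqAle.
  rewrite eq_sym powR_eq1 negb_or /= (gt_eqF rpos) /= orbF.
  have -> : (2 != 1 :> R) by rewrite pnatr_eq1.
  have -> : (2 < 0 :> R) = false by rewrite ltNge ler0n.
  rewrite -[X in X <= _](powRr0 2).
  by rewrite ler_powR ?ler1n // ltW.
move: Pr; rewrite -/c => Pr.
set A := [set w : R | \sum_(i < n) w < c] in Pr.
have Ae : A = [set w : R | w * n%:R < c].
  by apply/seteqP; split => w; rewrite /A /= sumr_const card_ord mulr_natr.
have mA : measurable A.
  have := @measurable_sum _ _ R setT _ (index_enum 'I_n) (fun _ : 'I_n => id)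
    (fun _ => @measurable_id _ _ setT).
  by move=> /(_ measurableT _ (measurable_itv `]-oo, c[%R)); rewrite setTI.
suff : (0 < dprob A)%E by rewrite Pr ltxx.
set s := c / (2 * n%:R).
have n0' : 0 < n%:R :> R by rewrite ltr0n.
have s0 : 0 < s by rewrite divr_gt0 // mulr_gt0.
have sn : s * n%:R = c / 2.
  by rewrite /s; field; rewrite gt_eqF.
have [fs0|fs0] := ltrP 0 (f s).
  have sub : `[0, s]%classic `<=` A.
    rewrite Ae => w /=; rewrite in_itv /= => /andP [w0 ws].
    apply: (le_lt_trans (y := s * n%:R)); first by rewrite ler_pM2r.
    by rewrite sn; lra.
  rewrite /dprob /=.
  have H1 : (\int[lebesgue_measure]_(x in `[0%R, s]) (f x)%:E <=
             \int[lebesgue_measure]_(x in A) (f x)%:E)%E.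
    apply: ge0_subset_integral => //.
    - by apply/measurable_EFinP; exact: measurable_funTS.
    - by move=> x _; rewrite lee_fin.
  apply: lt_le_trans H1.
  apply: (lt_le_trans (y := \int[lebesgue_measure]_(x in `[0%R, s]) (cst (f s)%:E) x)%E).
    rewrite integral_cst //= lebesgue_measure_itv /= lte_fin s0 /= sube0.
    by rewrite -EFinM lte_fin mulr_gt0.
  apply: ge0_le_integral => //.
  - by move=> x _; rewrite lee_fin ltW.
  - by apply/measurable_EFinP; exact: measurable_funTS.
  move=> x /=; rewrite in_itv /= => /andP [x0 xs]; rewrite lee_fin.
  by apply: fdec => //; rewrite in_itv /= andbT ?x0 ?ltW.
have fz y : s <= y -> f y = 0.
  move=> sy; apply/eqP; rewrite eq_le f0 andbT.
  apply: (le_trans _ fs0); apply: fdec => //; rewrite in_itv /= andbT.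
    exact: (le_trans (ltW s0)).
  exact: ltW.
have -> : dprob A = 1%E.
  rewrite -f1 -(setUv A) ge0_integral_setU //; last 4 first.
  - exact: measurableC.
  - by apply/measurable_EFinP; exact: measurable_funTS.
  - by move=> x _; rewrite lee_fin.
  - by rewrite /disj_set setICr.
  rewrite [X in (_ + X)%E](integral0_eq) ?adde0 //.
  move=> x /=; rewrite Ae /= => /negP; rewrite -leNgt => cx.
  have [x0|x0] := ltrP x 0; first by rewrite fneg.
  rewrite fz //; rewrite leNgt; apply/negP => xs.
  have : x * n%:R < c.
    apply: (le_lt_trans (y := s * n%:R)); first by rewrite ler_pM2r // ltW.
    by rewrite sn; lra.
  by rewrite ltNge cx.
by rewrite lte01.
Qed.
End dens.
Lemma cap_ge0 (R : realType) (f : R -> R) (rho : R) (d : measure_display)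
  (T : measurableType d) (P : probability T R) (n : nat) (X : 'I_n -> T -> R) :
  (forall x, x < 0 -> f x = 0) -> (forall i, measurable_fun setT (X i)) ->
  (forall i x, P (X i @^-1` `]-oo, x]) = cdf_of f x) ->
  (0 <= zero_outage_capacity P X rho)%E.
Proof.
move=> fneg mX HP.
apply: ereal_sup_ubound; exists 0 => //; split => //.
rewrite powRr0 subrr mul0r.
set S := [set w | \sum_(i < n) X i w < 0].
have mS : measurable S.
  have := @measurable_sum _ _ R setT _ (index_enum 'I_n) X mX.
  move=> /(_ measurableT _ (measurable_itv `]-oo, 0[%R)).
  by rewrite setTI.
apply/negligibleP => //.
have N i : P.-negligible (X i @^-1` `]-oo, 0[).
  apply: (@negligibleS _ _ _ _ (\bigcup_k X i @^-1` `]-oo, - k.+1%:R^-1])).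
    move=> w /= /[!in_itv] /= /ltr_add_invr [k] hk.
    exists k => //=; rewrite in_itv /=; apply: ltW.
    by rewrite -(ltrD2r (k.+1%:R^-1)) addNr.
  apply: negligible_bigcup => k; apply/negligibleP.
    have := (mX i) measurableT _ (measurable_itv `]-oo, - k.+1%:R^-1]%R).
    by rewrite setTI.
  apply: (etrans (HP i _)); rewrite /cdf_of integral0_eq // => x /=; rewrite in_itv /= => hx.
  rewrite fneg //; apply: (le_lt_trans hx).
  by rewrite oppr_lt0 invr_gt0 ltr0n.
apply: (@negligibleS _ _ _ _
  (\bigcup_k [set w | exists i : 'I_n, val i = k /\ X i w < 0])).
  move=> w /= Sw.
  have : [exists i : 'I_n, X i w < 0].
    apply/contraT; rewrite negb_exists => /forallP H.
    suff : 0 <= \sum_(i < n) X i w by rewrite leNgt Sw.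
    by apply: sumr_ge0 => i _; rewrite leNgt H.
  by case/existsP => i Xi; exists (val i) => //; exists i.
apply: negligible_bigcup => k.
have [kn|kn] := ltnP k n.
  apply: (negligibleS _ (N (Ordinal kn))) => w /= [i [ik Xi]].
  have -> : Ordinal kn = i by apply: val_inj.
  by rewrite /= in_itv.
apply: (negligibleS _ (negligible_set0 P)) => w /= [i [ik _]].
by move: (ltn_ord i); rewrite ik ltnNge kn.
Qed.

Theorem proposition2 (R : realType) (n : nat) (rho : R) (f : R -> R) :
  (2 <= n)%N -> 0 < rho -> decreasing_density f ->
  worst_case_zero_outage n f rho = 0%E.
Proof.
move=> n2 rho0 hf.
apply/eqP; rewrite eq_le; apply/andP; split.
  apply: ge_ereal_inf.
  exists (zero_outage_capacity (@dprob R f hf) (fun _ : 'I_n => id) rho).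
    exists _, R, (@dprob R f hf), (fun _ => id); split => //.
  apply: cap_le0 => //; exact: leq_trans n2.
apply: le_ereal_inf_tmp => _ [d [T [P [X [mX HX ->]]]]].
have [_ _ _ fneg _] := hf; exact: (@cap_ge0 R f rho d T P n X fneg mX HX).
Qed.
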